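(* Let $A$ be an irreducible abstract state space and $B$ an abstract state space. Then every isomorphism state $\omega \in A\otimes_{\max} B$ (if any exists) is pure in $A\otimes_{\max} B$, i.e., lies on an extremal ray of the positive cone of $A\otimes_{\max} B$ (equivalently, $\hat\omega$ lies on an extremal ray of the cone of positive linear maps $A^*\to B$).
   Context: An abstract state space is a pair $(A,u_A)$ where $A$ is a finite-dimensional real vector space with a closed, pointed, generating convex cone $A_+$, and $u_A$ is a strictly positive linear functional (an interior point of the dual cone $A^*_+=\{f\in A^*: f(A_+)\subseteq[0,\infty)\}$). $A$ is irreducible if it admits no decomposition $A=A_1\oplus A_2$ with $A_1,A_2$ nonzero subspaces and $A_+=(A_+\cap A_1)+(A_+\cap A_2)$. $A\otimes_{\max}B$ is the space of bilinear forms on $A^*\times B^*$, with positive cone consisting of forms $\omega$ with $\omega(a,b)\ge0$ for all $a\in A^*_+$, $b\in B^*_+$; a state is a positive such $\omega$ with $\omega(u_A,u_B)=1$. For a bilinear form $\omega$, define $\hat\omega:A^*\to B=B^{**}$ by $\hat\omega(a)(b)=\omega(a,b)$. A state $\omega$ is an isomorphism state if $\hat\omega:A^*\to B$ is an order-isomorphism, i.e., a linear bijection with $\hat\omega(a)\in B_+$ iff $a\in A^*_+$. *)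

(* Defs.v *)
From HB Require Import structures.
From mathcomp Require Import all_boot all_order all_algebra.
From mathcomp Require Import all_classical all_reals all_analysis.
Set Implicit Arguments. Unset Strict Implicit. Unset Printing Implicit Defensive.
Import Order.TTheory GRing.Theory Num.Theory.
Import numFieldNormedType.Exports.
Local Open Scope classical_set_scope.
Local Open Scope ring_scope.

(* A finite-dimensional real vector space is modelled by coordinates 'rV[R]_n.
   Its dual A^* is also modelled by 'rV[R]_n, via the canonical pairing below. *)
Definition dpair (R : realType) (n : nat) (a f : 'rV[R]_n) : R :=
  \sum_(i < n) a 0 i * f 0 i.

Definition convex_cone (R : realType) (n : nat) (C : set 'rV[R]_n) : Prop :=
  C 0 /\ (forall x y, C x -> C y -> C (x + y)) /\
  (forall (t : R) x, 0 <= t -> C x -> C (t *: x)).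

Definition pointed_cone (R : realType) (n : nat) (C : set 'rV[R]_n) : Prop :=
  forall x, C x -> C (- x) -> x = 0.

Definition generating_cone (R : realType) (n : nat) (C : set 'rV[R]_n) : Prop :=
  forall v, exists a b, C a /\ C b /\ v = a - b.

Definition dual_cone (R : realType) (n : nat) (C : set 'rV[R]_n) : set 'rV[R]_n :=
  [set f | forall a, C a -> 0 <= dpair a f].

Definition abstract_state_space (R : realType) (n : nat)
    (C : set 'rV[R]_n) (u : 'rV[R]_n) : Prop :=
  [/\ convex_cone C, closed C, pointed_cone C, generating_cone C
    & (interior (dual_cone C)) u].

Definition irreducible_ss (R : realType) (n : nat) (C : set 'rV[R]_n) : Prop :=
  ~ exists A1 A2 : {vspace 'rV[R]_n},
      [/\ (A1 + A2)%VS = fullv, (A1 :&: A2)%VS = 0%VS,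
          A1 != 0%VS, A2 != 0%VS &
          C = [set x | exists a1 a2, [/\ C a1, a1 \in A1, C a2, a2 \in A2
                                        & x = a1 + a2]]].

(* A ⊗_max B: bilinear forms on A^* x B^*, modelled as n x m matrices M with
   omega(f, g) = sum_ij f_i M_ij g_j *)
Definition bform (R : realType) (n m : nat) (M : 'M[R]_(n, m))
    (f : 'rV[R]_n) (g : 'rV[R]_m) : R :=
  (f *m M *m g^T) 0 0.

Definition max_tensor_cone (R : realType) (n m : nat)
    (CA : set 'rV[R]_n) (CB : set 'rV[R]_m) : set 'M[R]_(n, m) :=
  [set M | forall f g, dual_cone CA f -> dual_cone CB g -> 0 <= bform M f g].

Definition max_state (R : realType) (n m : nat)
    (CA : set 'rV[R]_n) (uA : 'rV[R]_n) (CB : set 'rV[R]_m) (uB : 'rV[R]_m)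
    (M : 'M[R]_(n, m)) : Prop :=
  max_tensor_cone CA CB M /\ bform M uA uB = 1.

(* hat omega : A^* -> B = B^**, f |-> omega(f, .); in coordinates f |-> f *m M,
   since bform M f g = dpair (f *m M) g. *)
Definition omega_hat (R : realType) (n m : nat) (M : 'M[R]_(n, m))
    (f : 'rV[R]_n) : 'rV[R]_m := f *m M.

Definition order_isomorphism (R : realType) (n m : nat)
    (DA : set 'rV[R]_n) (CB : set 'rV[R]_m) (T : 'rV[R]_n -> 'rV[R]_m) : Prop :=
  bijective T /\ forall f, CB (T f) <-> DA f.

Definition isomorphism_state (R : realType) (n m : nat)
    (CA : set 'rV[R]_n) (uA : 'rV[R]_n) (CB : set 'rV[R]_m) (uB : 'rV[R]_m)
    (M : 'M[R]_(n, m)) : Prop :=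
  max_state CA uA CB uB M /\ order_isomorphism (dual_cone CA) CB (omega_hat M).

Definition on_extremal_ray (R : realType) (V : lmodType R) (C : set V) (x : V) : Prop :=
  [/\ C x, x != 0 &
      forall y z, C y -> C z -> x = y + z -> exists t : R, 0 <= t /\ y = t *: x].

(* Main.v *)
From Pilot Require Import Defs.
From HB Require Import structures.
From mathcomp Require Import all_boot all_order all_algebra.
From mathcomp Require Import all_classical all_reals all_analysis.
From mathcomp Require Import ring lra.
Set Implicit Arguments. Unset Strict Implicit. Unset Printing Implicit Defensive.
Import Order.TTheory GRing.Theory Num.Theory.
Import numFieldNormedType.Exports.
Import Pilot.Defs.
Local Open Scope classical_set_scope.
Local Open Scope ring_scope.
Section Dpair.
Variables (R : realType) (n : nat).
Implicit Types (a b f g : 'rV[R]_n).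

Lemma dpairE a f : dpair a f = (a *m trmx f) 0 0.
Proof. by rewrite /dpair !mxE; apply: eq_bigr => i _; rewrite !mxE. Qed.

Lemma dpairC a f : dpair a f = dpair f a.
Proof. by rewrite /dpair; apply: eq_bigr => i _; rewrite mulrC. Qed.

Lemma dpairDl a b f : dpair (a + b) f = dpair a f + dpair b f.
Proof. by rewrite /dpair -big_split; apply: eq_bigr => i _; rewrite !mxE mulrDl. Qed.

Lemma dpairZl (t : R) a f : dpair (t *: a) f = t * dpair a f.
Proof. by rewrite /dpair mulr_sumr; apply: eq_bigr => i _; rewrite !mxE mulrA. Qed.

Lemma dpairNl a f : dpair (- a) f = - dpair a f.
Proof. by rewrite -scaleN1r dpairZl mulN1r. Qed.

Lemma dpairBl a b f : dpair (a - b) f = dpair a f - dpair b f.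
Proof. by rewrite dpairDl dpairNl. Qed.

Lemma dpair0l f : dpair 0 f = 0.
Proof. by rewrite /dpair big1 // => i _; rewrite mxE mul0r. Qed.

Lemma dpairDr a f g : dpair a (f + g) = dpair a f + dpair a g.
Proof. by rewrite dpairC dpairDl !(dpairC a). Qed.
Lemma dpairZr (t : R) a f : dpair a (t *: f) = t * dpair a f.
Proof. by rewrite dpairC dpairZl dpairC. Qed.
Lemma dpairNr a f : dpair a (- f) = - dpair a f.
Proof. by rewrite dpairC dpairNl dpairC. Qed.
Lemma dpairBr a f g : dpair a (f - g) = dpair a f - dpair a g.
Proof. by rewrite dpairDr dpairNr. Qed.

Lemma dpair_ge0 a : 0 <= dpair a a.
Proof. by rewrite /dpair sumr_ge0 // => i _; rewrite -expr2 sqr_ge0. Qed.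

Lemma dpair_eq0 a : dpair a a = 0 -> a = 0.
Proof.
move=> /eqP; rewrite /dpair psumr_eq0; last by move=> i _; rewrite -expr2 sqr_ge0.
move=> /allP H; apply/rowP => i; rewrite mxE.
have := H i (mem_index_enum _); rewrite /= -expr2 sqrf_eq0 => /eqP ->; done.
Qed.

End Dpair.

Section Bipolar.
Variables (R : realType) (n : nat).

Lemma cont_sum (I : Type) (s : seq I) (F : I -> 'rV[R]_n -> R) :
  (forall i, continuous (F i)) -> continuous (fun c => \sum_(i <- s) F i c).
Proof.
move=> HF; elim: s => [|a s IH].
  have -> : (fun c => \sum_(i <- [::]) F i c) = (fun=> 0).
    by apply: funext => c; rewrite big_nil.
  exact: cst_continuous.
have -> : (fun c => \sum_(i <- a :: s) F i c) = (fun c => F a c + \sum_(i <- s) F i c).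
  by apply: funext => c; rewrite big_cons.
by move=> x; apply: (cvgD (HF a x) (IH x)).
Qed.

Lemma coordB_cont (x : 'rV[R]_n) i : continuous (fun c : 'rV[R]_n => (x - c) 0 i).
Proof.
have -> : (fun c : 'rV[R]_n => (x - c) 0 i) = (fun c => x 0 i - c 0 i).
  by apply: funext => c; rewrite !mxE.
move=> z; apply: cvgB. all: try exact: cst_continuous. all: try exact: coord_continuous. all: exact: (@nbhs_filter _ z).
Qed.

Lemma phi_cont (x : 'rV[R]_n) : continuous (fun c : 'rV[R]_n => dpair (x - c) (x - c)).
Proof.
rewrite /dpair.
apply: (@cont_sum _ _ (fun i c => (x - c) 0 i * (x - c) 0 i)) => i z.
apply: cvgM; [exact: (@nbhs_filter _ z)|exact: coordB_cont|exact: coordB_cont].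
Qed.

Lemma sq_le_dpair (a : 'rV[R]_n) i : a 0 i * a 0 i <= dpair a a.
Proof.
rewrite /dpair (bigD1 i) //= lerDl sumr_ge0 // => j _.
by rewrite -expr2 sqr_ge0.
Qed.

Lemma abs_le_sq (t : R) : `|t| <= 1 + t * t.
Proof.
have [h|h] := leP `|t| 1.
  by apply: (le_trans h); rewrite lerDl -expr2 sqr_ge0.
have -> : t * t = `|t| * `|t| by rewrite -normrM ger0_norm // -expr2 sqr_ge0.
nra.
Qed.

Lemma bipolar (C : set 'rV[R]_n) : convex_cone C -> closed C ->
  forall x, (forall f, dual_cone C f -> 0 <= dpair x f) -> C x.
Proof.
move=> [C0 [CD CZ]] Ccl x Hx.
apply: contrapT => nCx.
pose phi (c : 'rV[R]_n) := dpair (x - c) (x - c).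
pose K := 2 + 2 * phi 0.
pose A := C `&` (phi @^-1` [set y | y <= phi 0]).
have Acl : closed A.
  apply: closedI => //; apply: preimage_closed; last exact: closed_le.
  by move=> y _; exact: phi_cont.
have Abox : A `<=` [set v : 'rV[R]_n | forall i, `[-K, K]%classic (v ord0 i)].
  move=> c [_ hc] i /=; rewrite in_itv /= -ler_norml.
  have -> : c 0 i = x 0 i - (x - c) 0 i by rewrite !mxE opprB addrC subrK.
  apply: (le_trans (ler_normB _ _)).
  rewrite /K mulrDl mul1r addrACA lerD //.
    apply: (le_trans (abs_le_sq _)); rewrite lerD //.
    by have := sq_le_dpair x i; rewrite /phi subr0.
  apply: (le_trans (abs_le_sq _)); rewrite lerD //.
  exact: (le_trans (sq_le_dpair (x - c) i) hc).
have Acomp : compact A.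
  apply: (subclosed_compact Acl _ Abox).
  apply: (@rV_compact _ _ (fun=> `[-K, K]%classic)) => i; exact: segment_compact.
have A0 : A !=set0 by exists 0; split => //=.
have [p pA pmin] := EVT_min_rV A0 Acomp (continuous_subspaceT (@phi_cont x)).
move: pA; rewrite inE => -[pC _].
have pmin' : forall c, C c -> phi p <= phi c.
  move=> c Cc; have [h|h] := leP (phi c) (phi 0).
    by apply: pmin; rewrite inE.
  apply: (le_trans _ (ltW h)); apply: pmin; rewrite inE; split => //=.
have var : forall d, (forall s, 0 < s -> s <= 1 -> C (p + s *: d)) ->
    dpair (x - p) d <= 0.
  move=> d Hd; rewrite leNgt; apply/negP => ha.
  set a := dpair (x - p) d in ha; set b := dpair d d.
  have b0 : 0 <= b := dpair_ge0 d.
  have ab0 : 0 < a + b by rewrite ltr_wpDr.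
  pose s := a / (a + b).
  have s0 : 0 < s by rewrite divr_gt0.
  have s1 : s <= 1 by rewrite ler_pdivrMr // mul1r lerDl.
  have := pmin' _ (Hd s s0 s1).
  have -> : phi (p + s *: d) = phi p - 2 * s * a + s * s * b.
    rewrite /phi opprD addrA !(dpairBl, dpairBr, dpairZl, dpairZr).
    rewrite /a /b !(dpairBl, dpairBr) (dpairC d x) (dpairC d p) (dpairC p x); ring.
  have e : s * (a + b) = a by rewrite /s divfK // gt_eqF.
  move=> h; nra.
have fdual : dual_cone C (p - x).
  move=> c Cc /=.
  have := var c (fun s s0 _ => CD _ _ pC (CZ _ _ (ltW s0) Cc)).
  by rewrite [dpair c _]dpairC -opprB dpairNl; lra.
have hpp : dpair (x - p) (- p) <= 0.
  apply: var => s s0 s1.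
  have -> : p + s *: - p = (1 - s) *: p by rewrite scalerBl scale1r scalerN.
  by apply: CZ => //; rewrite subr_ge0.
have phip : 0 < phi p.
  rewrite lt_def dpair_ge0 andbT; apply/eqP => /dpair_eq0 /eqP.
  by rewrite subr_eq0 => /eqP xp; apply: nCx; rewrite xp.
have := Hx _ fdual.
have -> : dpair x (p - x) = - phi p + dpair (x - p) (- p).
  rewrite /phi !(dpairBl, dpairBr, dpairNr, dpairNl).
  rewrite [dpair p x]dpairC; ring.
lra.
Qed.

End Bipolar.

Section Core.
Variables (R : realType) (n : nat) (C : set 'rV[R]_n) (u : 'rV[R]_n).
Hypotheses (C0 : C 0) (CD : forall x y, C x -> C y -> C (x + y))
  (CZ : forall (t : R) x, 0 <= t -> C x -> C (t *: x))
  (Ccl : closed C) (uint : interior (dual_cone C) u).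

Lemma dpair_delta (x : 'rV[R]_n) i : dpair x (delta_mx 0 i) = x 0 i.
Proof.
rewrite /dpair (bigD1 i) //= big1 ?addr0; first by rewrite !mxE !eqxx mulr1.
by move=> j /negbTE ji; rewrite !mxE ji andbF mulr0.
Qed.

Lemma delta_bound : exists2 d : R, 0 < d &
  forall x, C x -> forall i, d * `|x 0 i| <= dpair x u.
Proof.
have := uint; rewrite /interior /= => /nbhs_ballP [r r0 He].
exists (r / 2); first by rewrite divr_gt0.
move=> x Cx i.
have key : forall s : R, `|s| <= 1 -> 0 <= dpair x u + s * (r / 2) * x 0 i.
  move=> s hs.
  have : dual_cone C (u + (s * (r / 2)) *: delta_mx 0 i).
    apply: He; split => // a b; rewrite /ball /= !mxE.
    rewrite opprD addrA subrr add0r normrN normrM.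
    have hd : `|((a == 0) && (b == i))%:R : R| <= 1.
      by case: (_ && _); rewrite ?normr0 ?normr1.
    apply: (le_lt_trans (ler_wpM2l (normr_ge0 _) hd)); rewrite mulr1 normrM.
    rewrite (gtr0_norm (divr_gt0 r0 _)) //.
    apply: (le_lt_trans (ler_wpM2r (ltW (divr_gt0 r0 _)) hs)) => //.
    by rewrite mul1r ltr_pdivrMr // ltr_pMr // ltr1n.
  move=> /(_ x Cx); rewrite dpairDr dpairZr dpair_delta; lra.
have k1 := key 1; have k2 := key (-1).
rewrite normr1 in k1; rewrite normrN normr1 in k2.
have := k1 (lexx _); have := k2 (lexx _).
have [h|h] := leP 0 (x 0 i).
  by rewrite (ger0_norm h); lra.
by rewrite (ltr0_norm h); lra.
Qed.

Definition ext (e : 'rV[R]_n) :=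
  [/\ C e, e != 0 & forall y, C y -> C (e - y) -> exists t : R, y = t *: e].

Definition Lz (z v : 'rV[R]_n) :=
  exists2 eps : R, 0 < eps & forall t, `|t| <= eps -> C (z + t *: v).

Lemma Ccomb a b (x y : 'rV[R]_n) : 0 <= a -> 0 <= b -> C x -> C y -> C (a *: x + b *: y).
Proof. by move=> a0 b0 Cx Cy; apply: CD; apply: CZ. Qed.

Lemma Lz_C z v : Lz z v -> C z.
Proof. by case=> eps e0 H; have := H 0; rewrite normr0 scale0r addr0; apply; apply: ltW. Qed.

Lemma Lz_0 z : C z -> Lz z 0.
Proof. by move=> Cz; exists 1 => // t _; rewrite scaler0 addr0. Qed.

Lemma Lz_D z v w : Lz z v -> Lz z w -> Lz z (v + w).
Proof.
move=> [e1 e10 H1] [e2 e20 H2].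
exists (Num.min e1 e2 / 2); first by rewrite divr_gt0 // lt_min e10.
move=> t ht.
have h2 : `|2 * t| <= Num.min e1 e2.
  by rewrite normrM ger0_norm // mulrC -ler_pdivlMr.
have -> : z + t *: (v + w) = (1/2) *: (z + (2 * t) *: v) + (1/2) *: (z + (2 * t) *: w).
  by apply/rowP => k; rewrite !mxE; field.
apply: Ccomb; rewrite ?divr_ge0 //.
  by apply: H1; apply: (le_trans h2); rewrite ge_min lexx.
by apply: H2; apply: (le_trans h2); rewrite ge_min lexx orbT.
Qed.

Lemma Lz_Z z v (a : R) : Lz z v -> Lz z (a *: v).
Proof.
move=> Lv; have Cz := Lz_C Lv.
have [->|a0] := eqVneq a 0; first by rewrite scale0r; exact: Lz_0.
case: Lv => eps e0 H; exists (eps / `|a|); first by rewrite divr_gt0 ?normr_gt0.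
move=> t ht; rewrite scalerA; apply: H.
by rewrite normrM -ler_pdivlMr ?normr_gt0.
Qed.

Lemma Lz_span z (s : seq 'rV[R]_n) : C z -> (forall x, x \in s -> Lz z x) ->
  forall x, x \in span s -> Lz z x.
Proof.
move=> Cz; elim: s => [|v s IH] Hs x.
  by rewrite span_nil memv0 => /eqP ->; exact: Lz_0.
rewrite span_cons => /memv_addP [a ha [b hb ->]].
move: ha => /vlineP [k ->].
apply: Lz_D; first by apply: Lz_Z; apply: Hs; rewrite inE eqxx.
by apply: IH => // y ys; apply: Hs; rewrite inE ys orbT.
Qed.

Lemma Lz_self c : C c -> Lz c c.
Proof.
move=> Cc; exists (1/2) => // t ht.
have -> : c + t *: c = (1 + t) *: c by rewrite scalerDl scale1r.
apply: CZ => //; move: ht; rewrite ler_norml => /andP [h _]; lra.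
Qed.

Lemma Lz_part c y : C c -> C y -> C (c - y) -> Lz c y.
Proof.
move=> Cc Cy Ccy; exists 1 => // t ht.
have [t0|t0] := leP 0 t; first by apply: CD => //; apply: CZ.
have -> : c + t *: y = (1 + t) *: c + (- t) *: (c - y).
  by apply/rowP => k; rewrite !mxE; ring.
apply: Ccomb => //; last by lra.
by move: ht; rewrite ler_norml => /andP [h _]; lra.
Qed.

Lemma Lz_mono z1 z2 w (a b : R) : C z2 -> 0 < a -> 0 <= b -> Lz z1 w ->
  Lz (a *: z1 + b *: z2) w.
Proof.
move=> Cz2 a0 b0 [eps e0 H]; exists (a * eps); first by rewrite mulr_gt0.
move=> t ht.
have -> : a *: z1 + b *: z2 + t *: w = a *: (z1 + (t / a) *: w) + b *: z2.
  by apply/rowP => k; rewrite !mxE; field; rewrite gt_eqF.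
apply: Ccomb => //; first exact: ltW.
by apply: H; rewrite normrM normfV (gtr0_norm a0) ler_pdivrMr // mulrC.
Qed.

Lemma sup_step c w : Lz c w -> dpair w u = 0 -> w != 0 ->
  exists2 t, 0 < t & C (c + t *: w) /\ ~ Lz (c + t *: w) w.
Proof.
move=> Lw wu w0.
have [d d0 Hd] := delta_bound.
have [i wi] : exists i, w 0 i != 0.
  apply: contrapT => H; move/eqP: w0; apply; apply/rowP => j; rewrite mxE.
  by apply/eqP; apply: contrapT => /negP h; apply: H; exists j.
case: (Lw) => eps e0 He.
pose T := [set t : R | 0 <= t /\ C (c + t *: w)].
have Teps : T eps.
  rewrite /T /=; split; first exact: ltW.
  by apply: He; rewrite ger0_norm // ltW.
pose B := (`|c 0 i| + dpair c u / d) / `|w 0 i|.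
have TB : forall t, T t -> t <= B.
  move=> t [t0 Ct]; have := Hd _ Ct i.
  rewrite dpairDl dpairZl wu mulr0 addr0 => h.
  rewrite ler_pdivlMr ?normr_gt0 //.
  have : `|(c + t *: w) 0 i| <= dpair c u / d by rewrite ler_pdivlMr // mulrC.
  rewrite !mxE => h2.
  have -> : t * `|w 0 i| = `|(c 0 i + t * w 0 i) - c 0 i| by rewrite addrC addKr normrM ger0_norm.
  apply: (le_trans (ler_normB _ _)); lra.
have hsup : has_sup T by split; [exists eps | exists B => t Tt; exact: TB].
have Tcl : closed T.
  have -> : T = [set t | 0 <= t] `&` ((fun t => c + t *: w) @^-1` C) by [].
  apply: closedI; first exact: closed_ge.
  apply: preimage_closed => // t _.
  apply: cvgD; first exact: cvg_cst.
  exact: scalel_continuous.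
have Tts : T (sup T).
  have e := (closure_id T).1 Tcl; rewrite {1}e.
  by apply: closure_sup; case: hsup.
have tsge : eps <= sup T by apply: sup_upper_bound.
exists (sup T); first exact: lt_le_trans tsge.
split; first by case: Tts.
case=> eps' e0' H'.
have : T (sup T + eps').
  split; first by apply: addr_ge0; [apply: ltW; exact: lt_le_trans tsge|exact: ltW].
  have -> : c + (sup T + eps') *: w = c + sup T *: w + eps' *: w by rewrite scalerDl addrA.
  by apply: H'; rewrite ger0_norm // ltW.
move/(sup_upper_bound hsup); lra.
Qed.

Lemma pos_u c : C c -> c != 0 -> 0 < dpair c u.
Proof.
move=> Cc c0; have [d d0 Hd] := delta_bound.
have [i ci] : exists i, c 0 i != 0.
  apply: contrapT => H; move/eqP: c0; apply; apply/rowP => j; rewrite mxE.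
  by apply/eqP; apply: contrapT => /negP h; apply: H; exists j.
apply: lt_le_trans (Hd _ Cc i); by rewrite mulr_gt0 // normr_gt0.
Qed.

Lemma ext_scale e (a : R) : ext e -> 0 < a -> ext (a *: e).
Proof.
move=> [Ce e0 He] a0; split.
- by apply: CZ => //; exact: ltW.
- by rewrite scaler_eq0 negb_or gt_eqF.
move=> y Cy Cay.
have [t ht] : exists t, a^-1 *: y = t *: e.
  apply: He; first by apply: CZ => //; rewrite invr_ge0 ltW.
  have -> : e - a^-1 *: y = a^-1 *: (a *: e - y).
    by apply/rowP => k; rewrite !mxE; field; rewrite gt_eqF.
  by apply: CZ => //; rewrite invr_ge0 ltW.
exists t; rewrite scalerA mulrC -scalerA -ht scalerA mulfV ?scale1r //.
by rewrite gt_eqF.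
Qed.

Lemma split_step c : C c -> c != 0 -> ~ ext c ->
  exists v, [/\ Lz c v, dpair v u = 0 & v != 0].
Proof.
move=> Cc c0 next.
have : ~ (forall y, C y -> C (c - y) -> exists t : R, y = t *: c).
  by move=> H; apply: next; split.
move/existsNP => [y /not_implyP [Cy /not_implyP [Ccy ny]]].
have cu := pos_u Cc c0.
pose r := dpair y u / dpair c u.
exists (y + (- r) *: c); split.
- by apply: Lz_D; [exact: Lz_part | apply: Lz_Z; exact: Lz_self].
- by rewrite dpairDl dpairZl /r; field; rewrite gt_eqF.
apply/negP => /eqP h; apply: ny; exists r.
by rewrite -[y](subrK (r *: c)) -scaleNr h add0r.
Qed.

Lemma decomp_k k c : C c ->
  (forall s, free s -> (forall x, x \in s -> Lz c x) -> (size s <= k)%N) ->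
  exists s : seq 'rV[R]_n, (forall e, e \in s -> ext e) /\ c = \sum_(e <- s) e.
Proof.
elim: k c => [|k IH] c Cc Hb.
all: have [->|c0] := eqVneq c 0; first by exists [::]; rewrite big_nil.
all: have [ec|nec] := pselect (ext c);
  first by exists [:: c]; rewrite big_seq1; split => // e; rewrite inE => /eqP ->.
all: have [v [Lv vu v0]] := split_step Cc c0 nec.
  suff : (size [:: v] <= 0)%N by [].
  apply: Hb; first by rewrite seq1_free.
  by move=> x; rewrite inE => /eqP ->.
have [t1 t10 [Cz1 nL1]] := sup_step Lv vu v0.
have Lv' : Lz c (- v) by rewrite -scaleN1r; apply: Lz_Z.
have vu' : dpair (- v) u = 0 by rewrite dpairNl vu oppr0.
have v0' : - v != 0 by rewrite oppr_eq0.
have [t2 t20 [Cz2 nL2]] := sup_step Lv' vu' v0'.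
set z1 := c + t1 *: v in Cz1 nL1; set z2 := c + t2 *: - v in Cz2 nL2.
have t12 : 0 < t1 + t2 by rewrite addr_gt0.
pose a := t2 / (t1 + t2); pose b := t1 / (t1 + t2).
have a0 : 0 < a by rewrite divr_gt0.
have b0 : 0 < b by rewrite divr_gt0.
have ce : c = a *: z1 + b *: z2.
  by apply/rowP => j; rewrite /z1 /z2 /a /b !mxE; field; rewrite gt_eqF.
have ce' : c = b *: z2 + a *: z1 by rewrite addrC.
have [s1 [Hs1 e1]] : exists s, (forall e, e \in s -> ext e) /\ z1 = \sum_(e <- s) e.
  apply: IH => // s fs Ls.
  have : (size (v :: s) <= k.+1)%N.
    apply: Hb.
      rewrite free_cons fs andbT; apply/negP => vs; apply: nL1.
      exact: (Lz_span Cz1 Ls vs).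
    move=> x; rewrite inE => /orP [/eqP ->|xs] //.
    by rewrite ce; apply: Lz_mono => //; [exact: ltW | exact: Ls].
  by [].
have [s2 [Hs2 e2]] : exists s, (forall e, e \in s -> ext e) /\ z2 = \sum_(e <- s) e.
  apply: IH => // s fs Ls.
  have : (size (- v :: s) <= k.+1)%N.
    apply: Hb.
      rewrite free_cons fs andbT; apply/negP => vs; apply: nL2.
      exact: (Lz_span Cz2 Ls vs).
    move=> x; rewrite inE => /orP [/eqP ->|xs] //.
    by rewrite ce'; apply: Lz_mono => //; [exact: ltW | exact: Ls].
  by [].
exists (map (fun e => a *: e) s1 ++ map (fun e => b *: e) s2); split.
  move=> e; rewrite mem_cat => /orP [] /mapP [x xs ->]; apply: ext_scale => //.
  - exact: Hs1.
  - exact: Hs2.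
by rewrite ce e1 e2 big_cat !big_map !scaler_sumr.
Qed.

Lemma decomp c : C c ->
  exists s : seq 'rV[R]_n, (forall e, e \in s -> ext e) /\ c = \sum_(e <- s) e.
Proof.
move=> Cc; apply: (@decomp_k (\dim (fullv : {vspace 'rV[R]_n}))) => // s fs _.
by move/eqP: fs => <-; apply: dimvS; exact: subvf.
Qed.

End Core.

Section Core2.
Variables (R : realType) (n : nat) (C : set 'rV[R]_n) (u : 'rV[R]_n).
Hypotheses (C0 : C 0) (CD : forall x y, C x -> C y -> C (x + y))
  (CZ : forall (t : R) x, 0 <= t -> C x -> C (t *: x))
  (Ccl : closed C) (uint : interior (dual_cone C) u)
  (Cgen : generating_cone C) (Cirr : irreducible_ss C).
Variable Q : 'M[R]_n.
Hypotheses (HQ : forall c, C c -> C (c *m Q)) (HQ' : forall c, C c -> C (c - c *m Q)).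

Let ext := ext C.
Let decomp := decomp CD CZ Ccl uint.

Lemma eig e : ext e -> exists l : R, e *m Q = l *: e.
Proof. by case=> Ce _ He; apply: He; [exact: HQ | exact: HQ']. Qed.

Lemma sumC (s : seq 'rV[R]_n) (P : pred 'rV[R]_n) :
  (forall e, e \in s -> C e) -> C (\sum_(e <- s | P e) e).
Proof.
move=> H; rewrite big_seq_cond; apply: big_ind => //.
by move=> e /andP [es _]; exact: H.
Qed.

Lemma same e1 e2 l1 l2 : ext e1 -> ext e2 -> e1 *m Q = l1 *: e1 ->
  e2 *m Q = l2 *: e2 -> l1 = l2.
Proof.
move=> ex1 ex2 h1 h2; apply: contrapT => /eqP l12.
pose f : 'End('rV[R]_n) := linfun (mulmxr (Q - l1%:M)).
have fE x : f x = x *m Q - l1 *: x by rewrite lfunE /= mulmxBr mul_mx_scalar.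
pose A1 := lker f; pose A2 := limg f.
have inA1 e : e *m Q = l1 *: e -> e \in A1.
  by move=> h; rewrite memv_ker fE h subrr.
have inA2 e mu : e *m Q = mu *: e -> mu != l1 -> e \in A2.
  move=> h ml.
  have -> : e = f ((mu - l1)^-1 *: e).
    rewrite fE -scalemxAl h; apply/rowP => j; rewrite !mxE; field.
    by rewrite subr_eq0.
  exact: memv_img (memvf _).
have splitC x : C x -> exists x1 x2, [/\ C x1, x1 \in A1, C x2, x2 \in A2 & x = x1 + x2].
  move=> Cx; have [s [Hs ->]] := decomp Cx.
  exists (\sum_(e <- s | e *m Q == l1 *: e) e), (\sum_(e <- s | e *m Q != l1 *: e) e).
  split.
  - by apply: sumC => e /Hs [].
  - by rewrite big_seq_cond; apply: memv_suml => e /andP [_ /eqP h]; exact: inA1.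
  - by apply: sumC => e /Hs [].
  - rewrite big_seq_cond; apply: memv_suml => e /andP [es ne].
    have [mu hmu] := eig (Hs _ es).
    apply: (inA2 _ mu hmu); apply: contraNneq ne => ml; rewrite hmu ml.
    done.
  - by rewrite [LHS](bigID (fun e => e *m Q == l1 *: e)).
apply: Cirr; exists A1, A2.
have sumf : (A1 + A2)%VS = fullv.
  apply/eqP; rewrite eqEsubv subvf /=; apply/subvP => x _.
  have [a [b [Ca [Cb ->]]]] := Cgen x.
  have [a1 [a2 [Ca1 a1A Ca2 a2A ->]]] := splitC _ Ca.
  have [b1 [b2 [Cb1 b1A Cb2 b2A ->]]] := splitC _ Cb.
  rewrite opprD addrACA; apply: memv_add; exact: memvB.
split => //.
- apply/eqP; rewrite -dimv_eq0.
  have k2 := limg_ker_dim f fullv; rewrite capfv in k2.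
  have k1 := dimv_sum_cap A1 A2; rewrite sumf -k2 in k1.
  by move/eqP: k1; rewrite -[X in _ == X]addn0 eqn_add2l.
- by apply/negP => /eqP A0; case: ex1 => _ + _; rewrite -memv0 -A0 inA1.
- apply/negP => /eqP A0; case: ex2 => _ + _; rewrite -memv0 -A0.
  by move/negP; apply; apply: (inA2 _ l2 h2); rewrite eq_sym.
apply/seteqP; split => x /=.
  move=> Cx; have [x1 [x2 [? ? ? ? ->]]] := splitC _ Cx.
  by exists x1, x2.
by case=> a1 [a2 [Ca1 _ Ca2 _ ->]]; apply: CD.
Qed.

Lemma core : exists t : R, Q = t%:M.
Proof.
have [l Hl] : exists l : R, forall e, ext e -> e *m Q = l *: e.
  have [[e ee]|ne] := pselect (exists e, ext e).
    have [l hl] := eig ee; exists l => e' ee'.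
    have [l' hl'] := eig ee'; by rewrite hl' (same ee' ee hl' hl).
  by exists 0 => e ee; exfalso; apply: ne; exists e.
have allC c : C c -> c *m Q = l *: c.
  move=> Cc; have [s [Hs ->]] := decomp Cc.
  rewrite mulmx_suml scaler_sumr big_seq [RHS]big_seq; apply: eq_bigr => e es.
  exact: Hl (Hs _ es).
have allv (v : 'rV[R]_n) : v *m Q = l *: v.
  have [a [b [Ca [Cb ->]]]] := Cgen v.
  by rewrite mulmxBl allC // allC // scalerBr.
exists l; apply/row_matrixP => i; rewrite !rowE allv.
by rewrite mul_mx_scalar.
Qed.

End Core2.
Unset Implicit Arguments.

Theorem corollary3p5 (R : realType) (n m : nat)
    (CA : set 'rV[R]_n) (uA : 'rV[R]_n) (CB : set 'rV[R]_m) (uB : 'rV[R]_m) :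
  abstract_state_space CA uA -> irreducible_ss CA ->
  abstract_state_space CB uB ->
  forall M : 'M[R]_(n, m), isomorphism_state CA uA CB uB M ->
    on_extremal_ray (max_tensor_cone CA CB) M.
Proof.
move=> [CAcc CAcl _ CAgen uAint] Airr [CBcc CBcl _ CBgen uBint] M.
move=> [[Mcone MuB] [[Tinv TK KT] Hiso]].
have CAcc' := CAcc; case: CAcc' => [CA0 [CAD CAZ]].
have TE (f : 'rV[R]_n) : omega_hat M f = f *m M by [].
pose N : 'M[R]_(m, n) := \matrix_(i < m) Tinv (delta_mx 0 i).
have NM : N *m M = 1%:M.
  by apply/row_matrixP => i; rewrite row_mul rowK row1 -TE KT.
have inj : injective (omega_hat M) := can_inj TK.
have MNx (f : 'rV[R]_n) : f *m M *m N = f.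
  by rewrite -{1}(TK (f *m M *m N)) TE -mulmxA NM mulmx1 -TE TK.
have MN : M *m N = 1%:M.
  by apply/row_matrixP => i; rewrite row_mul row1 rowE MNx.
have uAD : dual_cone CA uA by apply: interior_subset.
have uBD : dual_cone CB uB by apply: interior_subset.
have key Y : max_tensor_cone CA CB Y -> forall h, CA h -> CA (h *m (Y *m N)^T).
  move=> HY h Ch; apply: (bipolar CAcc CAcl) => f Df.
  have -> : dpair (h *m (Y *m N)^T) f = bform Y f (h *m N^T).
    rewrite dpairE /bform.
    have -> : h *m (Y *m N)^T *m f^T = (f *m Y *m (h *m N^T)^T)^T.
      by rewrite !trmx_mul !trmxK !mulmxA.
    by rewrite mxE.
  apply: HY => // b Cb.
  have Df' : dual_cone CA (Tinv b) by apply/Hiso; rewrite KT.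
  rewrite -[b]KT TE dpairE.
  have -> : Tinv b *m M *m (h *m N^T)^T = Tinv b *m h^T.
    by rewrite trmx_mul trmxK -mulmxA (mulmxA M) MN mul1mx.
  by rewrite -dpairE dpairC; apply: Df'.
split => //.
  apply/negP => /eqP M0; move: MuB; rewrite M0 /bform mulmx0 mul0mx mxE => /eqP.
  by rewrite eq_sym oner_eq0.
move=> Y Z HY HZ MYZ.
have [t Ht] : exists t : R, (Y *m N)^T = t%:M.
  apply: (core CA0 CAD CAZ CAcl uAint CAgen Airr) => c Cc; first exact: key.
  have -> : c - c *m (Y *m N)^T = c *m (Z *m N)^T.
    have : (Y *m N)^T + (Z *m N)^T = 1%:M by rewrite -linearD /= -mulmxDl -MYZ MN trmx1.
    move=> e; rewrite -[c in c - _]mulmx1 -e mulmxDr addrC addKr //.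
  exact: key.
have YE : Y = t *: M.
  have : Y *m N = t%:M by rewrite -[Y *m N]trmxK Ht tr_scalar_mx.
  by move=> e; rewrite -[Y]mulmx1 -NM mulmxA e mul_scalar_mx.
exists t; split => //.
have := HY _ _ uAD uBD; rewrite YE /bform -scalemxAr -scalemxAl.
by rewrite mxE -/(bform M uA uB) MuB mulr1.
Qed.
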